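(* Let $X,Y$ be real normed linear spaces and $Z=X\oplus_pY$ with $1<p<\infty$. Let $(x,y)\in Z\setminus\{\theta\}$, where $x$ is $\varepsilon_x$-smooth in $X$ and $y$ is $\varepsilon_y$-smooth in $Y$ for some $\varepsilon_x,\varepsilon_y\in[0,2)$. Then $(x,y)$ is $\varepsilon$-smooth in $Z$ with $\varepsilon=\max\{\varepsilon_x,\varepsilon_y\}$.
   Context: $X\oplus_pY$ is $X\times Y$ with norm $(\|x\|^p+\|y\|^p)^{1/p}$. For a normed space $W$ and $w\neq\theta$, $J(w)=\{\phi\in S_{W^*}:\phi(w)=\|w\|\}$, and $w$ is $\delta$-smooth if $\sup_{\phi,\psi\in J(w)}\|\phi-\psi\|\le\delta$ (this is only defined for $w\neq\theta$, so the hypothesis includes $x\neq\theta$ and $y\neq\theta$). *)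

(* Defs.v *)
From HB Require Import structures.
From mathcomp Require Import all_boot all_order all_algebra.
From mathcomp Require Import all_classical all_reals all_analysis.
Set Implicit Arguments. Unset Strict Implicit. Unset Printing Implicit Defensive.
Import Order.TTheory GRing.Theory Num.Theory.
Import numFieldNormedType.Exports.
Local Open Scope classical_set_scope.
Local Open Scope ring_scope.

Section Dual.
Variables (R : realType) (V : lmodType R) (N : V -> R).

Definition lin_functional (f : V -> R) : Prop :=
  forall (a : R) (u v : V), f (a *: u + v) = a * f u + f v.

Definition bounded_functional (f : V -> R) : Prop :=
  exists M : R, forall v : V, `|f v| <= M * N v.

Definition dnorm (f : V -> R) : R :=
  sup [set `|f v| | v in [set v : V | N v <= 1]].

Definition inJ (w : V) (phi : V -> R) : Prop :=
  [/\ lin_functional phi, bounded_functional phi, dnorm phi = 1 & phi w = N w].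

Definition delta_smooth (w : V) (delta : R) : Prop :=
  w != 0 /\ forall phi psi : V -> R, inJ w phi -> inJ w psi ->
    dnorm (fun v => phi v - psi v) <= delta.
End Dual.

Definition psum_norm (R : realType) (X Y : normedModType R) (p : R)
  (z : X * Y) : R :=
  (`|z.1| `^ p + `|z.2| `^ p) `^ p^-1.

(* Main.v *)
Require Import Defs.
From HB Require Import structures.
From mathcomp Require Import all_boot all_order all_algebra.
From mathcomp Require Import all_classical all_reals all_analysis.
From mathcomp Require Import ring lra.
Import Order.TTheory GRing.Theory Num.Theory.
Import numFieldNormedType.Exports.
Local Open Scope classical_set_scope.
Local Open Scope ring_scope.
Set Implicit Arguments. Unset Strict Implicit.

Lemma tangent_bound (R : realType) (c d p z : R) : 0 < c -> 0 <= d -> 0 < p ->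
  (forall t, 0 < t -> t * z <= ((c+t)`^p + d)`^(p^-1) - (c`^p + d)`^(p^-1)) ->
  z <= p^-1 * (c`^p + d)`^(p^-1 - 1) * (p * c`^(p-1)).
Proof.
move=> c0 d0 p0 H.
set D := _ * _ * _.
pose g := fun t : R => (c + t)`^p + d.
pose h := (fun a : R => a `^ p^-1) \o g.
have gpos : 0 < g 0 by rewrite /g addr0 ltr_wpDr // powR_gt0.
have dg : is_derive (0:R) 1 g (p * c `^ (p - 1)).
  have e1 : is_derive (0:R) 1 (fun t : R => c + t) 1.
    have := is_deriveD (is_derive_cst c (0:R) 1) (is_derive_id (0:R) (1:R)).
    by rewrite add0r.
  have e2 : is_derive ((fun t : R => c + t) 0) 1 (fun a : R => a `^ p) (p * c `^ (p - 1)).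
    by rewrite /= addr0; apply: is_derive1_powR.
  have := is_derive1_comp e2 e1; rewrite mulr1 => e3.
  rewrite /g.
  have -> : (fun t => (c + t) `^ p + d) = ((fun a : R => a `^ p) \o (fun t : R => c + t)) + cst d.
    by apply: funext => t.
  have := is_deriveD e3 (is_derive_cst d (0:R) (1:R)); rewrite addr0; exact.
have dh : is_derive (0:R) 1 h D.
  have e2 : is_derive (g 0) 1 (fun a : R => a `^ p^-1) (p^-1 * (g 0) `^ (p^-1 - 1)).
    exact: is_derive1_powR.
  have := is_derive1_comp e2 dg.
  by rewrite /D /g addr0.
have cv : (fun t : R => t^-1 *: (h (t *: 1 + 0) - h 0)) @ 0^' --> D.
  have [dd <-] := dh. exact: dd.
apply: contrapT => /negP; rewrite -ltNge => Dz.
have ev0 := @cvgr_lt R R (0:R)^' (dnbhs_filter _) _ _ cv _ Dz.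
rewrite near_withinE in ev0.
have [e /= e0 He] := (nbhs_ballP _ _).1 ev0.
have tpos : 0 < e / 2 by rewrite divr_gt0.
have tlt := He (e / 2) _ (lt0r_neq0 tpos).
have /tlt {}tlt : ball 0 e (e / 2).
  by rewrite /ball /= sub0r normrN gtr0_norm // ltr_pdivrMr // ltr_pMr // ltr1n.
move: (H _ tpos); rewrite /= in tlt.
rewrite /h /g /= addr0 /GRing.scale /= mulr1 in tlt.
rewrite -(ler_pdivlMl _ _ tpos) => Hz.
rewrite addr0 in tlt. by move: (lt_le_trans tlt Hz); rewrite ltxx.
Qed.

Section Gen.
Variables (R : realType) (V : lmodType R) (N : V -> R).

Lemma lin0 (f : V -> R) : lin_functional f -> f 0 = 0.
Proof.
move=> lf; have := lf 1 0 0; rewrite scaler0 addr0 mul1r => /eqP.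
by rewrite -subr_eq subrr eq_sym => /eqP.
Qed.

Lemma linZ (f : V -> R) a u : lin_functional f -> f (a *: u) = a * f u.
Proof. by move=> lf; have := lf a u 0; rewrite addr0 lin0 // addr0. Qed.

Lemma linD (f : V -> R) u v : lin_functional f -> f (u + v) = f u + f v.
Proof. by move=> lf; have := lf 1 u v; rewrite scale1r mul1r. Qed.

Lemma linB_fun (f g : V -> R) : lin_functional f -> lin_functional g ->
  lin_functional (fun v => f v - g v).
Proof. by move=> lf lg a u v; rewrite lf lg; ring. Qed.

Lemma linZ_fun (f : V -> R) c : lin_functional f -> lin_functional (fun v => c * f v).
Proof. by move=> lf a u v; rewrite lf; ring. Qed.

Lemma dnorm_le (f : V -> R) c : N 0 <= 1 -> (forall v, N v <= 1 -> `|f v| <= c) ->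
  dnorm N f <= c.
Proof.
move=> N0 H; apply: ge_sup.
  by exists `|f 0|; exists 0.
by move=> _ [v Nv <-]; apply: H.
Qed.

Lemma dnorm_ge (f : V -> R) M v0 : (forall v, N v <= 1 -> `|f v| <= M) -> N v0 <= 1 ->
  `|f v0| <= dnorm N f.
Proof.
move=> H Nv0; apply: ub_le_sup; last by exists v0.
by exists M => _ [v Nv <-]; apply: H.
Qed.

Lemma dnorm_eq (f : V -> R) c v0 : N 0 <= 1 -> (forall v, N v <= 1 -> `|f v| <= c) ->
  N v0 <= 1 -> `|f v0| = c -> dnorm N f = c.
Proof.
move=> N0 H Nv0 fv0; apply/eqP; rewrite eq_le (dnorm_le N0 H) /=.
by rewrite -fv0; apply: (dnorm_ge H).
Qed.

Lemma dnorm_bound (f : V -> R) v : (forall a w, N (a *: w) = `|a| * N w) ->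
  (forall w, 0 <= N w) -> lin_functional f -> bounded_functional N f ->
  `|f v| <= dnorm N f * N v.
Proof.
move=> NZ N0 lf [M HM].
have ub : forall u, N u <= 1 -> `|f u| <= `|M|.
  move=> u Nu; apply: (le_trans (HM u)).
  apply: (le_trans (ler_wpM2r (N0 u) (ler_norm M))).
  by rewrite -[X in _ <= X]mulr1 ler_wpM2l.
have [Nv0|Nvpos] := eqVneq (N v) 0.
  have := HM v; rewrite Nv0 !mulr0 => H.
  by apply: (le_trans H).
have Npos : 0 < N v by rewrite lt0r Nvpos N0.
set w := (N v)^-1 *: v.
have Nw : N w = 1 by rewrite NZ ger0_norm ?invr_ge0 ?(ltW Npos) // mulVf.
have := dnorm_ge (v0 := w) ub; rewrite Nw lexx => /(_ isT).
have ip : 0 <= (N v)^-1 by rewrite invr_ge0 ltW.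
rewrite /w linZ // normrM (ger0_norm ip) => h.
by rewrite -ler_pdivrMr // mulrC.
Qed.
End Gen.

Section PS.
Variables (R : realType) (X Y : normedModType R) (p : R).
Hypothesis p0 : 0 < p.
Let N := @psum_norm R X Y p.

Lemma psum_ge0 z : 0 <= N z.
Proof. exact: powR_ge0. Qed.

Lemma pinvK (c : R) : 0 <= c -> (c `^ p) `^ p^-1 = c.
Proof. by move=> c0; rewrite -powRrM mulfV ?gt_eqF // powRr1. Qed.

Lemma psumZ a (z : X * Y) : N (a *: z) = `|a| * N z.
Proof.
case: z => u v; rewrite /N /psum_norm /=.
rewrite !normrZ !powRM // -mulrDr powRM ?addr_ge0 ?powR_ge0 //.
by rewrite pinvK.
Qed.

Lemma psum_u0 (u : X) : N (u, 0) = `|u|.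
Proof. by rewrite /N /psum_norm /= normr0 powR0 ?gt_eqF // addr0 pinvK. Qed.

Lemma psum_0v (v : Y) : N (0, v) = `|v|.
Proof. by rewrite /N /psum_norm /= normr0 powR0 ?gt_eqF // add0r pinvK. Qed.

Lemma psum0 : N 0 = 0.
Proof. by have := psum_u0 0; rewrite normr0. Qed.

Lemma pair_split (u : X) (v : Y) : (u, v) = (u, 0) + (0, v).
Proof. apply/eqP; rewrite xpair_eqE /= addr0 add0r !eqxx //. Qed.

End PS.
Lemma aq (R : realType) (p c S : R) : 1 < p -> 0 <= c -> 0 < S ->
  (c `^ (p-1) * S `^ (p^-1 - 1)) `^ (p / (p - 1)) = c `^ p / S.
Proof.
move=> p1 c0 S0.
have p0 : p != 0 by rewrite gt_eqF // (lt_trans ltr01).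
have pm1 : p - 1 != 0 by rewrite subr_eq0 gt_eqF.
rewrite powRM ?powR_ge0 // -!powRrM.
have -> : (p - 1) * (p / (p - 1)) = p by field; rewrite ?pm1 ?p0.
have -> : (p^-1 - 1) * (p / (p - 1)) = -1 by field; rewrite ?pm1 ?p0.
by rewrite powRN powRr1 // ltW.
Qed.

Lemma asum (R : realType) (p c d : R) : 1 < p -> 0 <= c -> 0 <= d -> 0 < c `^ p + d `^ p ->
  c `^ (p-1) * (c `^ p + d `^ p) `^ (p^-1 - 1) * c +
  d `^ (p-1) * (c `^ p + d `^ p) `^ (p^-1 - 1) * d = (c `^ p + d `^ p) `^ p^-1.
Proof.
move=> p1 c0 d0 S0.
have p0 : 0 < p by rewrite (lt_trans ltr01).
rewrite -!mulrA ![_ `^ (p^-1 - 1) * _]mulrC !mulrA !(mulrC _ c) !(mulrC _ d).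
rewrite !mulr_powRB1 // -mulrDl.
rewrite -[in RHS](subrK 1 p^-1).
rewrite [RHS]powRD; last by rewrite (gt_eqF S0) implybT.
by rewrite powRr1 ?(ltW S0) // mulrC.
Qed.


Lemma Jbound (R : realType) (X Y : normedModType R) (p : R) phi z :
  0 < p -> inJ (@psum_norm R X Y p) z phi ->
  forall w, `|phi w| <= psum_norm p w.
Proof.
move=> p0 [lf bf dn1 _] w.
have := dnorm_bound w (psumZ p0) (@psum_ge0 _ _ _ p) lf bf.
by rewrite dn1 mul1r.
Qed.

Lemma lin_left (R : realType) (X Y : normedModType R) (phi : X * Y -> R) :
  lin_functional phi -> lin_functional (fun u : X => phi (u, 0)).
Proof.
move=> lf a u v; rewrite -lf; congr phi.
by apply/eqP; rewrite xpair_eqE /= scaler0 addr0 !eqxx.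
Qed.

Lemma lin_right (R : realType) (X Y : normedModType R) (phi : X * Y -> R) :
  lin_functional phi -> lin_functional (fun v : Y => phi (0, v)).
Proof.
move=> lf a u v; rewrite -lf; congr phi.
by apply/eqP; rewrite xpair_eqE /= scaler0 addr0 !eqxx.
Qed.

Lemma nbound_restr (R : realType) (V : normedModType R) (f : V -> R) (c : R) :
  lin_functional f -> (forall u, `|f u| <= `|u|) ->
  (forall w, `|w| <= 1 -> f w <= c) -> forall u, `|f u| <= c * `|u|.
Proof.
move=> lf b1 H u.
have bf : bounded_functional (fun v : V => `|v|) f by exists 1 => v; rewrite mul1r.
apply: (le_trans (dnorm_bound u (fun a w => normrZ a w) (fun w => normr_ge0 w) lf bf)).
apply: ler_wpM2r => //; apply: dnorm_le; first by rewrite normr0.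
move=> v v1; rewrite ler_norml H // andbT.
by rewrite lerNl -mulN1r -linZ // scaleN1r; apply: H; rewrite normrN.
Qed.


Lemma powR_mono (R : realType) (r a b : R) : 0 <= r -> 0 <= a -> a <= b -> a `^ r <= b `^ r.
Proof.
move=> r0 a0 ab; apply: (ge0_ler_powR r0); rewrite ?nnegrE //.
exact: le_trans ab.
Qed.

Lemma stepA (R : realType) (X Y : normedModType R) (p : R) (x : X) (y : Y) phi :
  1 < p -> x != 0 -> inJ (psum_norm p) (x, y) phi ->
  forall w : X, `|w| <= 1 ->
  phi (w, 0) <= `|x| `^ (p-1) * (`|x| `^ p + `|y| `^ p) `^ (p^-1 - 1).
Proof.
move=> p1 hx Jphi w w1.
have p0 : 0 < p by rewrite (lt_trans ltr01).
have [lf bf dn1 phixy] := Jphi.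
have hb := Jbound p0 Jphi.
have nx0 : 0 < `|x| by rewrite normr_gt0.
have key := @tangent_bound R `|x| (`|y| `^ p) p (phi (w, 0)) nx0 (powR_ge0 _ _) p0.
have -> : `|x| `^ (p-1) * (`|x| `^ p + `|y| `^ p) `^ (p^-1 - 1) =
   p^-1 * (`|x| `^ p + `|y| `^ p) `^ (p^-1 - 1) * (p * `|x| `^ (p - 1)).
  by field; rewrite gt_eqF.
apply: key => t tpos.
have e : phi (t *: (w, 0) + (x, y)) = t * phi (w, 0) + phi (x, y) := lf t (w, 0) (x, y).
rewrite phixy in e.
have := hb (t *: (w, 0) + (x, y)).
rewrite e /psum_norm /= => H.
rewrite lerBrDr; apply: (le_trans (ler_norm _)); apply: (le_trans H).
apply: powR_mono; first by rewrite invr_ge0 ltW.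
  by rewrite addr_ge0 // powR_ge0.
rewrite scaler0 add0r lerD2r; apply: powR_mono; [exact: ltW | exact: normr_ge0|].
apply: (le_trans (ler_normD _ _)); rewrite normrZ gtr0_norm // addrC lerD2l.
by rewrite -[X in _ <= X]mulr1 ler_wpM2l // ltW.
Qed.

Lemma stepB (R : realType) (X Y : normedModType R) (p : R) (x : X) (y : Y) phi :
  1 < p -> y != 0 -> inJ (psum_norm p) (x, y) phi ->
  forall w : Y, `|w| <= 1 ->
  phi (0, w) <= `|y| `^ (p-1) * (`|x| `^ p + `|y| `^ p) `^ (p^-1 - 1).
Proof.
move=> p1 hy Jphi w w1.
have p0 : 0 < p by rewrite (lt_trans ltr01).
have [lf bf dn1 phixy] := Jphi.
have hb := Jbound p0 Jphi.
have ny0 : 0 < `|y| by rewrite normr_gt0.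
have key := @tangent_bound R `|y| (`|x| `^ p) p (phi (0, w)) ny0 (powR_ge0 _ _) p0.
have -> : `|y| `^ (p-1) * (`|x| `^ p + `|y| `^ p) `^ (p^-1 - 1) =
   p^-1 * (`|y| `^ p + `|x| `^ p) `^ (p^-1 - 1) * (p * `|y| `^ (p - 1)).
  rewrite (addrC (`|y| `^ p) (`|x| `^ p)); field; by rewrite gt_eqF.
apply: key => t tpos.
have e : phi (t *: (0, w) + (x, y)) = t * phi (0, w) + phi (x, y) := lf t (0, w) (x, y).
rewrite phixy in e.
have := hb (t *: (0, w) + (x, y)).
rewrite e /psum_norm /= => H.
rewrite (addrC (`|y| `^ p) (`|x| `^ p)) (addrC ((`|y| + t) `^ p) (`|x| `^ p)).
rewrite lerBrDr; apply: (le_trans (ler_norm _)); apply: (le_trans H).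
apply: powR_mono; first by rewrite invr_ge0 ltW.
  by rewrite addr_ge0 // powR_ge0.
rewrite scaler0 add0r lerD2l; apply: powR_mono; [exact: ltW | exact: normr_ge0|].
apply: (le_trans (ler_normD _ _)); rewrite normrZ gtr0_norm // addrC lerD2l.
by rewrite -[X in _ <= X]mulr1 ler_wpM2l // ltW.
Qed.

Lemma Jdecomp (R : realType) (X Y : normedModType R) (p : R) (x : X) (y : Y) phi :
  1 < p -> x != 0 -> y != 0 -> inJ (psum_norm p) (x, y) phi ->
  [/\ forall u, `|phi (u, 0)| <= `|x| `^ (p-1) * (`|x| `^ p + `|y| `^ p) `^ (p^-1 - 1) * `|u|,
      forall v, `|phi (0, v)| <= `|y| `^ (p-1) * (`|x| `^ p + `|y| `^ p) `^ (p^-1 - 1) * `|v|,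
      phi (x, 0) = `|x| `^ (p-1) * (`|x| `^ p + `|y| `^ p) `^ (p^-1 - 1) * `|x| &
      phi (0, y) = `|y| `^ (p-1) * (`|x| `^ p + `|y| `^ p) `^ (p^-1 - 1) * `|y|].
Proof.
move=> p1 hx hy Jphi.
have p0 : 0 < p by rewrite (lt_trans ltr01).
have [lf bf dn1 phixy] := Jphi.
have hb := Jbound p0 Jphi.
have hu : forall u, `|phi (u, 0)| <= `|x| `^ (p-1) * (`|x| `^ p + `|y| `^ p) `^ (p^-1 - 1) * `|u|.
  apply: (nbound_restr (f := fun u => phi (u, 0))).
  - exact: lin_left.
  - by move=> u; have := hb (u, 0); rewrite psum_u0.
  - exact: stepA.
have hv : forall v, `|phi (0, v)| <= `|y| `^ (p-1) * (`|x| `^ p + `|y| `^ p) `^ (p^-1 - 1) * `|v|.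
  apply: (nbound_restr (f := fun v => phi (0, v))).
  - exact: lin_right.
  - by move=> v; have := hb (0, v); rewrite psum_0v.
  - exact: stepB.
have S0 : 0 < `|x| `^ p + `|y| `^ p by rewrite ltr_pwDl ?powR_ge0 // powR_gt0 // normr_gt0.
have hs := asum p1 (normr_ge0 x) (normr_ge0 y) S0.
have hsum : phi (x, 0) + phi (0, y) = (`|x| `^ p + `|y| `^ p) `^ p^-1.
  by rewrite -linD // -pair_split phixy.
have h1 := le_trans (ler_norm _) (hu x).
have h2 := le_trans (ler_norm _) (hv y).
split => //; lra.
Qed.

Lemma mkJ (R : realType) (V : normedModType R) (f : V -> R) (a : R) (x : V) :
  0 < a -> x != 0 -> lin_functional f -> (forall u, `|f u| <= a * `|u|) ->
  f x = a * `|x| -> inJ (fun v : V => `|v|) x (fun u => a^-1 * f u).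
Proof.
move=> a0 hx lf hf fx.
have nx0 : 0 < `|x| by rewrite normr_gt0.
have hb : forall u, `|a^-1 * f u| <= `|u|.
  move=> u; rewrite normrM gtr0_norm ?invr_gt0 // ler_pdivrMl //.
split.
- exact: linZ_fun.
- by exists 1 => u; rewrite mul1r.
- apply: (@dnorm_eq _ _ _ _ 1 (`|x|^-1 *: x)).
  + by rewrite normr0 ler01.
  + by move=> v v1; apply: le_trans (hb v) v1.
  + by rewrite normrZ gtr0_norm ?invr_gt0 // mulVf ?gt_eqF.
  + rewrite (linZ _ _ lf) fx normrM gtr0_norm ?invr_gt0 // normrM gtr0_norm ?invr_gt0 //.
    rewrite gtr0_norm ?mulr_gt0 //; field.
    by rewrite !gt_eqF.
- by rewrite fx mulrA mulVf ?gt_eqF // mul1r.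
Qed.

Lemma diffbound (R : realType) (V : normedModType R) (f g : V -> R) (x : V) (e : R) :
  inJ (fun v : V => `|v|) x f -> inJ (fun v : V => `|v|) x g ->
  dnorm (fun v : V => `|v|) (fun v => f v - g v) <= e ->
  forall u, `|f u - g u| <= e * `|u|.
Proof.
move=> [lf bf df _] [lg bg dg _] hd u.
have NZ : forall a (w : V), `|a *: w| = `|a| * `|w| by move=> a w; exact: normrZ.
have N0 : forall w : V, 0 <= `|w| by move=> w; exact: normr_ge0.
have hf : forall w, `|f w| <= `|w|.
  by move=> w; have := dnorm_bound w NZ N0 lf bf; rewrite df mul1r.
have hg : forall w, `|g w| <= `|w|.
  by move=> w; have := dnorm_bound w NZ N0 lg bg; rewrite dg mul1r.
have bfg : bounded_functional (fun v : V => `|v|) (fun v => f v - g v).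
  exists 2 => w; apply: (le_trans (ler_normB _ _)).
  by have := hf w; have := hg w; lra.
apply: (le_trans (dnorm_bound u NZ N0 (linB_fun lf lg) bfg)).
exact: ler_wpM2r.
Qed.

Unset Implicit Arguments.
Close Scope classical_set_scope.

Theorem theorem6p2 (R : realType) (X Y : normedModType R) (p : R)
  (x : X) (y : Y) (ex ey : R) :
  1 < p ->
  0 <= ex -> ex < 2 -> 0 <= ey -> ey < 2 ->
  delta_smooth (fun v : X => `|v|) x ex ->
  delta_smooth (fun v : Y => `|v|) y ey ->
  delta_smooth (psum_norm p) (x, y) (Num.max ex ey).
Proof.
move=> p1 ex0 ex2 ey0 ey2 [hx Sx] [hy Sy].
have p0 : 0 < p by rewrite (lt_trans ltr01).
split.
  apply/negP => /eqP H; move: hx => /eqP; apply.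
  exact: (congr1 fst H).
move=> phi psi Jphi Jpsi.
have nx0 : 0 < `|x| by rewrite normr_gt0.
have ny0 : 0 < `|y| by rewrite normr_gt0.
have S0 : 0 < `|x| `^ p + `|y| `^ p by rewrite ltr_pwDl ?powR_ge0 // powR_gt0.
have [pu pv px py] := Jdecomp p1 hx hy Jphi.
have [qu qv qx qy] := Jdecomp p1 hx hy Jpsi.
set S := `|x| `^ p + `|y| `^ p in S0 pu pv px py qu qv qx qy.
set a := `|x| `^ (p - 1) * S `^ (p^-1 - 1) in pu px qu qx.
set b := `|y| `^ (p - 1) * S `^ (p^-1 - 1) in pv py qv qy.
have a0 : 0 < a by rewrite mulr_gt0 // powR_gt0.
have b0 : 0 < b by rewrite mulr_gt0 // powR_gt0.
have [lf _ _ _] := Jphi.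
have [lg _ _ _] := Jpsi.
have Jf1 := mkJ a0 hx (lin_left lf) pu px.
have Jf2 := mkJ a0 hx (lin_left lg) qu qx.
have Jg1 := mkJ b0 hy (lin_right lf) pv py.
have Jg2 := mkJ b0 hy (lin_right lg) qv qy.
have dX := diffbound Jf1 Jf2 (Sx _ _ Jf1 Jf2).
have dY := diffbound Jg1 Jg2 (Sy _ _ Jg1 Jg2).
have hX : forall u, `|phi (u, 0) - psi (u, 0)| <= a * ex * `|u|.
  move=> u; have := dX u.
  rewrite -mulrBr normrM gtr0_norm ?invr_gt0 // ler_pdivrMl // mulrA //.
have hY : forall v, `|phi (0, v) - psi (0, v)| <= b * ey * `|v|.
  move=> v; have := dY v.
  rewrite -mulrBr normrM gtr0_norm ?invr_gt0 // ler_pdivrMl // mulrA //.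
set e := Num.max ex ey.
have exe : ex <= e by rewrite le_max lexx.
have eye : ey <= e by rewrite le_max lexx orbT.
pose q := p / (p - 1).
have pm1 : p - 1 != 0 by rewrite subr_eq0 gt_eqF.
have q0 : 0 < q by rewrite divr_gt0 // subr_gt0.
have pq : p^-1 + q^-1 = 1 by rewrite /q; field; rewrite ?pm1 ?gt_eqF.
have abq : (a `^ q + b `^ q) `^ q^-1 = 1.
  rewrite /a /b /q !aq ?normr_ge0 // -mulrDl mulfV ?gt_eqF //.
  by rewrite powR1.
apply: dnorm_le; first by rewrite psum0 // ler01.
case=> u v Nuv.
have hol := hoelder2 (normr_ge0 u) (normr_ge0 v) (ltW a0) (ltW b0) p0 q0 pq.
rewrite abq mulr1 in hol.
have E1 : phi (u, v) = phi (u, 0) + phi (0, v) by rewrite -(linD _ _ lf) -pair_split.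
have E2 : psi (u, v) = psi (u, 0) + psi (0, v) by rewrite -(linD _ _ lg) -pair_split.
have -> : phi (u, v) - psi (u, v) = (phi (u, 0) - psi (u, 0)) + (phi (0, v) - psi (0, v)).
  by rewrite E1 E2 opprD addrACA.
apply: (le_trans (ler_normD _ _)).
have h1 := hX u; have h2 := hY v.
have k1 : a * ex * `|u| <= a * e * `|u|.
  by rewrite ler_wpM2r // ler_wpM2l // ltW.
have k2 : b * ey * `|v| <= b * e * `|v|.
  by rewrite ler_wpM2r // ler_wpM2l // ltW.
have Nuv' : (`|u| `^ p + `|v| `^ p) `^ p^-1 <= 1 by [].
have e0 : 0 <= e by apply: le_trans exe.
have k3 : e * (`|u| * a + `|v| * b) <= e * 1.
  apply: ler_wpM2l => //; exact: le_trans hol Nuv'.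
have k4 : a * e * `|u| + b * e * `|v| = e * (`|u| * a + `|v| * b) by ring.
rewrite mulr1 -k4 in k3.
exact: le_trans (lerD h1 h2) (le_trans (lerD k1 k2) k3).
Qed.
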